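(* Let $n\ge 2$ and let $R$ be the complex Leibniz algebra with basis $\{h,e_1,\dots,e_n\}$ and nonzero products $[e_i,e_1]=e_{i+1}$ ($1\le i\le n-1$), $[h,e_1]=-e_1$, $[e_i,h]=ie_i$ ($1\le i\le n$). A linear map $D:R\to R$ is an anti-derivation iff there exist $\beta_1,\dots,\beta_{n+1}\in\mathbb C$ such that $$D(h)=\sum_{i=1}^{n-1}i\beta_{i+1}e_i+\beta_{n+1}e_n,\qquad D(e_1)=\sum_{i=1}^n\beta_ie_i,\qquad D(e_i)=0\ (2\le i\le n).$$
   Context: Leibniz algebras are right Leibniz over $\mathbb C$: $[x,[y,z]]=[[x,y],z]-[[x,z],y]$. Unlisted products are zero. An anti-derivation is a linear map $D$ with $D([x,y])=[D(x),y]-[D(y),x]$ for all $x,y$. *)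

(* Defs.v *)
(* The field C is modelled as complex R (= R[i]) for R : realType. *)
From HB Require Import structures.
From mathcomp Require Import all_boot all_order all_algebra.
From mathcomp Require Import complex.
From mathcomp Require Import reals.
Set Implicit Arguments. Unset Strict Implicit. Unset Printing Implicit Defensive.
Import Order.TTheory GRing.Theory Num.Theory.
Local Open Scope ring_scope.

(* The underlying space of R: row vectors of length n+1 over C.
   Coordinate 0 is h, coordinate i (1 <= i <= n) is e_i. *)
Definition bv (C : fieldType) (n i : nat) : 'rV[C]_(n.+1) := delta_mx 0 (inord i).

Definition cst (C : fieldType) (n i j : nat) : 'rV[C]_(n.+1) :=
  if (i == 0%N) && (j == 1%N) then - bv C n 1
  else if (1 <= i <= n)%N && (j == 0%N) then i%:R *: bv C n i
  else if (1 <= i < n)%N && (j == 1%N) then bv C n i.+1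
  else 0.

Definition brk (C : fieldType) (n : nat) (x y : 'rV[C]_(n.+1)) : 'rV[C]_(n.+1) :=
  \sum_(i < n.+1) \sum_(j < n.+1) (x 0 i * y 0 j) *: cst C n i j.

Definition anti_derivation (C : fieldType) (n : nat)
  (D : 'rV[C]_(n.+1) -> 'rV[C]_(n.+1)) : Prop :=
  forall x y, D (brk x y) = brk (D x) y - brk (D y) x.

(* Main.v *)
Require Import Defs.
From HB Require Import structures.
From mathcomp Require Import all_boot all_order all_algebra.
From mathcomp Require Import complex.
From mathcomp Require Import reals ring zify.
Import Order.TTheory GRing.Theory Num.Theory.
Local Open Scope ring_scope.

Section S.
Variables (C : fieldType) (n : nat).
Hypothesis hn1 : (1 <= n)%N.

Definition c (u : 'rV[C]_(n.+1)) (m : nat) := u 0 (inord m).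

Lemma bvE m (k : 'I_n.+1) : (m <= n)%N -> bv C n m 0 k = (m == k :> nat)%:R.
Proof.
move=> hm; rewrite /bv mxE eqxx /=.
by rewrite -(inj_eq val_inj) /= inordK // eq_sym.
Qed.

Lemma cbv m j : (m <= n)%N -> (j <= n)%N -> c (bv C n m) j = (m == j)%:R.
Proof. by move=> hm hj; rewrite /c bvE // inordK. Qed.

Lemma sum_if (T : nmodType) (F : 'I_n.+1 -> T) (a : nat) : (a <= n)%N ->
  \sum_(i < n.+1) (if (i:nat) == a then F i else 0) = F (inord a).
Proof.
move=> ha; rewrite -big_mkcond (eq_bigl (pred1 (inord a))) ?big_pred1_eq //.
by move=> i /=; rewrite -(inj_eq val_inj) /= inordK.
Qed.

Lemma cstE (i j : nat) (k : 'I_n.+1) : (i <= n)%N ->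
  cst C n i j 0 k = if (i==0)%N&&(j==1)%N then -((1 == k:>nat)%:R)
   else if (1<=i<=n)%N&&(j==0)%N then i%:R * (i == k:>nat)%:R
   else if (1<=i<n)%N&&(j==1)%N then (i.+1 == k :> nat)%:R else 0.
Proof.
move=> hi; rewrite /cst; case: ifP => _; first by rewrite mxE bvE.
case: ifP => _; first by rewrite mxE bvE.
case: ifP => [/andP [/andP [_ h] _]|_]; first by rewrite bvE.
by rewrite mxE.
Qed.


Lemma inner (u y : 'rV[C]_(n.+1)) (i k : 'I_n.+1) :
  \sum_(j < n.+1) ((u 0 i * y 0 j) *: cst C n i j) 0 k =
  u 0 i * c y 0 * cst C n i 0 0 k + u 0 i * c y 1 * cst C n i 1 0 k.
Proof.
rewrite (eq_bigr (fun j : 'I_n.+1 => (if (j:nat) == 0%N then u 0 i * c y 0 * cst C n i 0 0 k else 0)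
  + (if (j:nat) == 1%N then u 0 i * c y 1 * cst C n i 1 0 k else 0))).
  by rewrite big_split /= !sum_if.
move=> j _; rewrite mxE; case: j => [[|[|j]] hj] /=.
- by rewrite addr0 /c; congr (_ * _ * _); congr (y 0 _); apply: val_inj; rewrite /= inordK.
- by rewrite add0r /c; congr (_ * _ * _); congr (y 0 _); apply: val_inj; rewrite /= inordK.
- by rewrite addr0 /cst !andbF /= mxE mulr0.
Qed.

Lemma brkE (u y : 'rV[C]_(n.+1)) (k : 'I_n.+1) :
  brk u y 0 k = (if (k == 1%N :> nat) then - (c u 0 * c y 1) else 0)
   + (if (1 <= k)%N then k%:R * (u 0 k * c y 0) else 0)
   + (if (2 <= k)%N then c u k.-1 * c y 1 else 0).
Proof.
have hk := ltn_ord k.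
rewrite /brk summxE; under eq_bigr => i _ do rewrite summxE inner.
rewrite (eq_bigr (fun i : 'I_n.+1 =>
   (if (i:nat) == k then (if (1 <= i)%N then i%:R * (u 0 i * c y 0) else 0) else 0)
 + (if (i:nat) == 0%N then - (u 0 i * c y 1) * (1 == k :> nat)%:R else 0)
 + (if (i:nat) == k.-1 then (if (2 <= k)%N then u 0 i * c y 1 else 0) else 0))).
  rewrite !big_split /= !sum_if //; last by rewrite (leq_trans (leq_pred _)).
  rewrite !inordK ?(leq_trans (leq_pred _)) //= inord_val.
  rewrite /c eq_sym; case: eqP => _; rewrite ?mulr1 ?mulr0 /=; ring.
move=> i _; rewrite !cstE ?leq_ord //; move: (u 0 i) => a.
case: i => [[|i] hi] /=; case: k hk => [[|[|k]] hk'] _ /=.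
all: rewrite ?mulr0 ?mulr1 ?addr0 ?add0r ?mul0r.
all: rewrite ?oppr0 ?mulrN1 ?if_same ?mulr0 ?addr0 //.
- by case: i hi => [|i] hi; rewrite /= ?mulr1 ?mulr0 //; ring.
- rewrite !eqSS /=; have [->|ne] := eqVneq i k.+1.
    by rewrite eqxx (gtn_eqF (ltnSn k)) /=; case: ifP => _; ring.
  rewrite ?(negPf ne) /=; have [->|ne2] := eqVneq i k; rewrite ?eqxx /=.
    by rewrite -ltnS hk' /=; ring.
  by rewrite if_same; ring.
Qed.


Lemma brkc (u y : 'rV[C]_(n.+1)) m : (m <= n)%N ->
  c (brk u y) m = (if (m == 1%N) then - (c u 0 * c y 1) else 0)
   + (if (1 <= m)%N then m%:R * (c u m * c y 0) else 0)
   + (if (2 <= m)%N then c u m.-1 * c y 1 else 0).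
Proof. by move=> hm; rewrite /c brkE inordK. Qed.

Lemma cE (u : 'rV[C]_(n.+1)) (k : 'I_n.+1) : u 0 k = c u k.
Proof. by rewrite /c inord_val. Qed.

Lemma cD (a b : C) (u v : 'rV[C]_(n.+1)) m : c (a *: u + b *: v) m = a * c u m + b * c v m.
Proof. by rewrite /c !mxE. Qed.

Lemma sum_bv_coord a N (f : nat -> C) (k : 'I_n.+1) : (N <= n.+1)%N ->
  (\sum_(a <= i < N) f i *: bv C n i) 0 k = if (a <= k < N)%N then f k else 0.
Proof.
elim: N => [|N IH] hN; first by rewrite big_geq // mxE andbF.
case: (leqP a N) => haN.
  rewrite big_nat_recr //= mxE IH ?(ltnW hN) // mxE bvE; last by lia.
  have [->|ne] := eqVneq (k:nat) N.
    by rewrite ltnn andbF add0r mulr1 leqnn haN.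
  by rewrite mulr0 addr0 ltnS (leq_eqVlt k N) (negPf ne).
rewrite big_geq ?(ltnW haN) // mxE; case: ifP => // /andP [h1 h2]; lia.
Qed.

Lemma decomp (x : 'rV[C]_(n.+1)) : x = \sum_(i < n.+1) x 0 i *: bv C n i.
Proof.
apply/rowP => k; rewrite summxE.
rewrite (eq_bigr (fun i : 'I_n.+1 => if (i:nat) == k then x 0 i else 0)).
  by rewrite sum_if ?leq_ord // -[RHS]/(c x k) -cE.
move=> i _; rewrite mxE bvE ?leq_ord // eq_sym; case: eqP => _; rewrite ?mulr1 ?mulr0 //.
Qed.


Lemma cA (u v : 'rV[C]_(n.+1)) m : c (u + v) m = c u m + c v m.
Proof. by rewrite /c mxE. Qed.
Lemma cZ a (u : 'rV[C]_(n.+1)) m : c (a *: u) m = a * c u m.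
Proof. by rewrite /c mxE. Qed.
Lemma cN (u : 'rV[C]_(n.+1)) m : c (- u) m = - c u m.
Proof. by rewrite /c mxE. Qed.
Lemma c0 m : c 0 m = 0.
Proof. by rewrite /c mxE. Qed.
Lemma cS a N (f : nat -> C) m : (N <= n.+1)%N -> (m <= n)%N ->
  c (\sum_(a <= i < N) f i *: bv C n i) m = if (a <= m < N)%N then f m else 0.
Proof. by move=> hN hm; rewrite /c sum_bv_coord // inordK. Qed.

Lemma rowc (u v : 'rV[C]_(n.+1)) : (forall m, (m <= n)%N -> c u m = c v m) -> u = v.
Proof. move=> h; apply/rowP => k; rewrite (cE u) (cE v); apply: h; exact: leq_ord. Qed.

Lemma brk0 (y : 'rV[C]_(n.+1)) : brk 0 y = 0.
Proof. by apply: rowc => m hm; rewrite brkc // !c0 !mul0r ?mulr0 ?oppr0 !if_same !addr0. Qed.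

Lemma brkbv (u : 'rV[C]_(n.+1)) j : (2 <= j <= n)%N -> brk u (bv C n j) = 0.
Proof.
move=> /andP [h1 h2]; apply: rowc => m hm; rewrite brkc // c0 !cbv //.
rewrite (gtn_eqF h1) (gtn_eqF (ltnW h1)) !mulr0 oppr0 !if_same; by rewrite !addr0.
Qed.


Lemma brk_bv1 i : (1 <= i < n)%N -> brk (bv C n i) (bv C n 1) = bv C n i.+1.
Proof.
move=> /andP [h1 h2]; apply: rowc => m hm; rewrite brkc // !cbv //; try lia.
rewrite (gtn_eqF h1) /= !mulr0 !mul0r oppr0 !if_same !add0r.
case: m hm => [|[|m]] hm //=; rewrite ?mulr1 //.
by rewrite eqSS (gtn_eqF h1).
Qed.

End S.
Arguments c {C n}.

Theorem mainTheorem7 (R : realType) (n : nat) (hn : (2 <= n)%N)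
  (D : {linear 'rV[R[i]]_(n.+1) -> 'rV[R[i]]_(n.+1)}) :
  anti_derivation D <->
  exists beta : nat -> R[i],
    [/\ D (bv _ n 0) = \sum_(1 <= i < n) (i%:R * beta i.+1) *: bv _ n i
                       + beta n.+1 *: bv _ n n,
        D (bv _ n 1) = \sum_(1 <= i < n.+1) beta i *: bv _ n i
      & forall i : nat, (2 <= i <= n)%N -> D (bv _ n i) = 0].
Proof.
have hn1 : (1 <= n)%N by lia.
split.
- move=> AD.
  set V := D (bv _ n 0); set W := D (bv _ n 1).
  have E k : (k <= n)%N -> - c W k = c (brk V (bv _ n 1)) k - c (brk W (bv _ n 0)) k.
    move=> hk; have := AD (bv _ n 0) (bv _ n 1).
    have -> : brk (bv R[i] n 0) (bv _ n 1) = - bv _ n 1.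
      apply: rowc => // m hm; rewrite brkc // cN !cbv //; try lia.
      case: m hm => [|[|m]] hm /=; rewrite ?mulr0 ?mul0r ?oppr0 ?mulr1 ?addr0 ?add0r //.
    rewrite raddfN => /(congr1 (fun v => c v k)); rewrite cN => ->.
    by rewrite cA cN.
  have E0 : c W 0 = 0.
    have := E 0 (leq0n n); rewrite !brkc //= !addr0 subrr => /eqP.
    by rewrite oppr_eq0 => /eqP.
  have E1 : c V 0 = 0.
    have := E 1 hn1; rewrite !brkc //= !cbv //= => /eqP; rewrite -subr_eq0 => /eqP h.
    by apply: subr0_eq; apply: etrans h; ring.
  have E2 j : (j.+2 <= n)%N -> c V j.+1 = j.+1%:R * c W j.+2.
    move=> hj; have := E j.+2 hj; rewrite !brkc //= !cbv //=; try lia.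
    move=> /esym /eqP; rewrite -subr_eq0 => /eqP h.
    by apply: subr0_eq; apply: etrans h; ring.
  exists (fun i => if i == n.+1 then c V n else c W i); split.
  - apply: rowc => // m hm; rewrite cA cS // cZ cbv //.
    case: m hm => [|m] hm /=; first by rewrite E1 (gtn_eqF hn1) mulr0 addr0.
    case: (ltnP m.+1 n) => hmn.
      rewrite E2 // (gtn_eqF hmn) mulr0 addr0 (_ : (m.+2 == n.+1) = false) //.
      by apply/negbTE; rewrite eqSS; apply/eqP; lia.
    have e : n = m.+1 by lia.
    rewrite add0r eqxx (_ : n == m.+1) ?mulr1; last by apply/eqP.
    by have -> : m.+1 = n by lia.
  - apply: rowc => // m hm; rewrite cS //.
    case: m hm => [|m] hm /=; first by rewrite E0.
    by rewrite ltnS hm eqSS (_ : (m == n) = false) //; apply/negbTE; apply/eqP; lia.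
  - have Z : forall j, (j.+2 <= n)%N -> D (bv _ n j.+2) = 0.
      elim=> [|j IH] hj.
        by rewrite -(@brk_bv1 _ _ hn1 1) // AD subrr.
      rewrite -(@brk_bv1 _ _ hn1 j.+2); last by lia.
      by rewrite AD IH ?brk0 ?brkbv ?subrr //; lia.
    by case=> [|[|j]] // /andP [_ hj]; apply: Z.
- case=> beta [hV hW hZ] x y.
  have Dx : forall z, D z = c z 0 *: D (bv _ n 0) + c z 1 *: D (bv _ n 1).
    move=> z; rewrite {1}(decomp _ _ z) linear_sum.
    rewrite (eq_bigr (fun i : 'I_n.+1 => (if (i:nat) == 0%N then c z 0 *: D (bv _ n 0) else 0)
       + (if (i:nat) == 1%N then c z 1 *: D (bv _ n 1) else 0))).
      by rewrite big_split /= !sum_if.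
    move=> i _; rewrite linearZ; case: i => [[|[|i]] hi] /=.
    + by rewrite addr0 /c; congr (z 0 _ *: _); apply: val_inj; rewrite /= inordK.
    + by rewrite add0r /c; congr (z 0 _ *: _); apply: val_inj; rewrite /= inordK.
    + by rewrite hZ ?scaler0 ?addr0 //; lia.
  rewrite (Dx (brk x y)) (Dx x) (Dx y).
  apply: rowc => // m hm.
  rewrite !cA !cN !cZ !brkc // hV hW !cA !cZ !cS //; try lia.
  rewrite !cA !cZ !cS ?cbv //; try lia.
  case: m hm => [|[|m]] hm /=.
  + ring.
  + rewrite ltnS hn1 (gtn_eqF hn1) mulr0; ring.
  + have h1 : (m.+1 < n)%N by lia.
    have h2 : (n == m.+1) = false by apply/negbTE/eqP; lia.
    have e1 : (m.+2 < n.+1)%N = true by lia.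
    have e4 : (m.+1 < n.+1)%N = true by lia.
    rewrite e1 e4 h1 h2 /= mulr0 addr0; ring.
Qed.
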